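(* Let $V=\{(y,x)\in M:\max_{1\le i\le d}e^{-\lambda_iy/2}|x_i|\le1\}$. There exists a constant $C_V>0$ such that $$HB_{\xi_-}(-C_V)\subset V\cap\{y\le0\}\subset HB_{\xi_-}(C_V).$$ In particular the set $\mathcal{H}=\partial(V\cap\{y\le0\})$ lies in the region between the horospheres $H_{\xi_-}(-C_V)$ and $H_{\xi_-}(C_V)$.
   Context: Let $d\ge1$, $0<\lambda_1\le\cdots\le\lambda_d$, and $M$ be $\mathbb{R}^{d+1}$ with coordinates $(y,x)$ and metric $g=dy^2+\sum_{i=1}^d e^{-2\lambda_i y}dx_i^2$. The boundary at infinity is $\partial M=\{\xi_+\}\cup\mathbb{R}^d$, where $\xi_+$ is the common limit as $t\to+\infty$ of the vertical geodesics $t\mapsto(t,x)$ and $x\in\mathbb{R}^d$ is the limit of $t\mapsto(t,x)$ as $t\to-\infty$; $\xi_-$ denotes the point $0\in\mathbb{R}^d\subset\partial M$. With $o=(0,0)$ and $\alpha$ the unit-speed geodesic ray from $o$ to $\xi$, $b_\xi(p)=\lim_{s\to\infty}(\mathrm{dist}(\alpha(s),p)-s)$; $H_\xi(t)=\{b_\xi=t\}$ and $HB_\xi(t)=\{b_\xi\le t\}$. *)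

(* Defs.v *)
From Stdlib Require Import Reals Lra.
From Coquelicot Require Import Coquelicot.
Open Scope R_scope.

(* A point of M = R^{d+1} is a pair (y, x); x : nat -> R, and only the
   coordinates x 0, ..., x (d-1) are relevant (the others are ignored by
   every definition below). *)
Definition point := (R * (nat -> R))%type.

(* Riemannian speed of a curve (gy, gx) at time t for the metric
   g = dy^2 + sum_{i<d} e^{-2 lam_i y} dx_i^2. *)
Definition speed (d : nat) (lam : nat -> R) (gy : R -> R) (gx : nat -> R -> R)
  (t : R) : R :=
  sqrt ((Derive gy t) ^ 2 +
        sum_n (fun i => exp (-2 * lam i * gy t) * (Derive (gx i) t) ^ 2) (d - 1)).

Definition C1_curve (d : nat) (gy : R -> R) (gx : nat -> R -> R) : Prop :=
  (forall t, ex_derive gy t /\ continuous (Derive gy) t) /\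
  (forall i, (i < d)%nat -> forall t, ex_derive (gx i) t /\ continuous (Derive (gx i)) t).

Definition curve_length (d : nat) (lam : nat -> R) (gy : R -> R) (gx : nat -> R -> R) : R :=
  RInt (speed d lam gy gx) 0 1.

Definition rdist (d : nat) (lam : nat -> R) (p q : point) : Rbar :=
  Glb_Rbar (fun L => exists (gy : R -> R) (gx : nat -> R -> R),
     C1_curve d gy gx /\
     gy 0 = fst p /\ (forall i, (i < d)%nat -> gx i 0 = snd p i) /\
     gy 1 = fst q /\ (forall i, (i < d)%nat -> gx i 1 = snd q i) /\
     L = curve_length d lam gy gx).

(* o = (0,0); the unit-speed geodesic ray from o to xi_- = 0 in R^d is
   s |-> (-s, 0).  Busemann function of xi_-:
   b(p) = lim_{s -> +oo} (dist(alpha(s), p) - s). *)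
Definition origin_ray (s : R) : point := (- s, fun _ => 0).

Definition busemann_xi_minus (d : nat) (lam : nat -> R) (p : point) : Rbar :=
  Lim (fun s => real (rdist d lam (origin_ray s) p) - s) p_infty.

Definition horoball_xi_minus (d : nat) (lam : nat -> R) (t : R) (p : point) : Prop :=
  Rbar_le (busemann_xi_minus d lam p) t.

Definition Vset (d : nat) (lam : nat -> R) (p : point) : Prop :=
  forall i, (i < d)%nat -> exp (- lam i * fst p / 2) * Rabs (snd p i) <= 1.

Definition Vneg (d : nat) (lam : nat -> R) (p : point) : Prop :=
  Vset d lam p /\ fst p <= 0.

(* Topological boundary in the Euclidean topology of R^{d+1}
   (sup-norm balls on the relevant coordinates). *)
Definition near_set (d : nat) (S : point -> Prop) (p : point) : Prop :=
  forall eps, 0 < eps -> exists q, S q /\ Rabs (fst q - fst p) < eps /\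
    (forall i, (i < d)%nat -> Rabs (snd q i - snd p i) < eps).

Definition boundary (d : nat) (S : point -> Prop) (p : point) : Prop :=
  near_set d S p /\ near_set d (fun q => ~ S q) p.

(* Main.v *)
Require Import Defs.
From Stdlib Require Import Reals Lra Lia Classical.
From Coquelicot Require Import Coquelicot.
Open Scope R_scope.

Lemma cplus (f g : R -> R) x : continuous f x -> continuous g x -> continuous (fun t => f t + g t) x.
Proof. intros; apply (continuous_plus f g x); auto. Qed.
Lemma cmult (f g : R -> R) x : continuous f x -> continuous g x -> continuous (fun t => f t * g t) x.
Proof. intros; apply (continuous_mult f g x); auto. Qed.
Lemma cconst (c : R) x : continuous (fun _ : R => c) x.
Proof. apply continuous_const. Qed.
Lemma cid x : continuous (fun t : R => t) x.
Proof. apply continuous_id. Qed.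
Lemma copp (f : R -> R) x : continuous f x -> continuous (fun t => - f t) x.
Proof. intros; apply (continuous_opp f x); auto. Qed.
Lemma cminus (f g : R -> R) x : continuous f x -> continuous g x -> continuous (fun t => f t - g t) x.
Proof. intros; apply (continuous_minus f g x); auto. Qed.
Lemma cpow2 (f : R -> R) x : continuous f x -> continuous (fun t => (f t)^2) x.
Proof. intros; simpl. apply cmult; auto. apply cmult; auto. apply cconst. Qed.

Definition cl (w : R) : R := (Rabs w - Rabs (w - 1) + 1) / 2.
Definition q (w : R) : R := 6 * cl w * (1 - cl w).
Definition Sf (u : R) : R := RInt q 0 u.

Lemma cl_cont w : continuous cl w.
Proof.
  unfold cl. apply cmult; [|apply cconst].
  apply cplus; [|apply cconst]. apply cminus.
  apply continuous_Rabs.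
  apply continuous_Rabs_comp. apply cminus; [apply cid|apply cconst].
Qed.

Lemma q_cont w : continuous q w.
Proof.
  unfold q. apply cmult. apply cmult. apply cconst. apply cl_cont.
  apply cminus. apply cconst. apply cl_cont.
Qed.

Lemma cl_low w : w <= 0 -> cl w = 0.
Proof. intros; unfold cl; rewrite (Rabs_left1 w) by lra; rewrite Rabs_left1 by lra; lra. Qed.
Lemma cl_high w : 1 <= w -> cl w = 1.
Proof. intros; unfold cl; rewrite (Rabs_pos_eq w) by lra; rewrite Rabs_pos_eq by lra; lra. Qed.
Lemma cl_mid w : 0 <= w <= 1 -> cl w = w.
Proof. intros; unfold cl; rewrite (Rabs_pos_eq w) by lra; rewrite Rabs_left1 by lra; lra. Qed.

Lemma q_out w : w <= 0 \/ 1 <= w -> q w = 0.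
Proof. intros [H|H]; unfold q; [rewrite cl_low|rewrite cl_high]; auto; ring. Qed.
Lemma q_mid w : 0 <= w <= 1 -> q w = 6 * w * (1 - w).
Proof. intros; unfold q; rewrite cl_mid; auto. Qed.
Lemma q_nonneg w : 0 <= q w.
Proof.
  destruct (Rle_dec w 0). rewrite q_out; lra.
  destruct (Rle_dec 1 w). rewrite q_out; lra.
  rewrite q_mid by lra. apply Rmult_le_pos; lra.
Qed.
Lemma q_pos_mid w : q w <> 0 -> 0 < w < 1.
Proof.
  intros H. destruct (Rle_dec w 0). rewrite q_out in H; lra.
  destruct (Rle_dec 1 w). rewrite q_out in H; lra. lra.
Qed.

Lemma q_exRInt a b : ex_RInt q a b.
Proof. apply (ex_RInt_continuous (V:=R_CompleteNormedModule)); intros; apply q_cont. Qed.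

Lemma Sf_deriv u : is_derive Sf u (q u).
Proof.
  apply (is_derive_RInt q Sf 0 u).
  apply filter_forall; intros b. unfold Sf. apply (RInt_correct (V:=R_CompleteNormedModule)), q_exRInt.
  apply q_cont.
Qed.

Lemma Sf_low u : u <= 0 -> Sf u = 0.
Proof.
  intros H. unfold Sf. rewrite (RInt_ext q (fun _ => 0)).
  rewrite RInt_const. unfold scal; simpl; unfold mult; simpl; ring.
  intros x Hx. apply q_out. left. rewrite Rmax_left in Hx by lra. lra.
Qed.

Lemma Sf_one : Sf 1 = 1.
Proof.
  unfold Sf. rewrite (RInt_ext q (fun w => 6 * w * (1 - w))).
  2:{ intros x Hx. rewrite Rmin_left in Hx by lra. rewrite Rmax_right in Hx by lra.
      apply q_mid; lra. }
  rewrite (is_RInt_unique (V:=R_CompleteNormedModule) _ 0 1 (minus ((fun w => 3*w^2 - 2*w^3) 1) ((fun w => 3*w^2 - 2*w^3) 0))).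
  unfold minus, plus, opp; simpl; ring.
  apply (is_RInt_derive (V:=R_CompleteNormedModule) (fun w => 3*w^2 - 2*w^3)).
  intros; auto_derive; auto; ring.
  intros; apply cmult. apply cmult. apply cconst. apply cid. apply cminus. apply cconst. apply cid.
Qed.

Lemma Sf_high u : 1 <= u -> Sf u = 1.
Proof.
  intros H. unfold Sf.
  rewrite <- (RInt_Chasles q 0 1 u) by apply q_exRInt.
  fold (Sf 1). rewrite Sf_one.
  rewrite (RInt_ext q (fun _ => 0)).
  rewrite RInt_const. unfold scal, plus; simpl; unfold mult, plus; simpl; ring.
  intros x Hx. apply q_out. right. rewrite Rmin_left in Hx by lra. lra.
Qed.

Lemma Sf_lin a b t : is_derive (fun t => Sf (a * t + b)) t (a * q (a * t + b)).
Proof.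
  apply (is_derive_comp Sf (fun t => a * t + b)).
  apply Sf_deriv. auto_derive; auto; ring.
Qed.

Lemma cder (f : R -> R) x : ex_derive f x -> continuous f x.
Proof. intros H. apply (ex_derive_continuous (K:=R_AbsRing) (V:=R_NormedModule)); auto. Qed.
Lemma exRInt_c (f : R -> R) a b : (forall z, continuous f z) -> ex_RInt f a b.
Proof. intros; apply (ex_RInt_continuous (V:=R_CompleteNormedModule)); auto. Qed.

Lemma sum_cont (F : nat -> R -> R) n t :
  (forall i, (i <= n)%nat -> continuous (F i) t) ->
  continuous (fun t => sum_n (fun i => F i t) n) t.
Proof.
  induction n; intros H.
  - apply (continuous_ext (F 0%nat)). intros; rewrite sum_O; auto. apply H; lia.
  - apply (continuous_ext (fun t => sum_n (fun i => F i t) n + F (S n) t)).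
    intros; rewrite sum_Sn; auto.
    apply cplus. apply IHn; intros; apply H; lia. apply H; lia.
Qed.

Lemma speed_cont d lam gy gx t : (1 <= d)%nat -> C1_curve d gy gx ->
  continuous (speed d lam gy gx) t.
Proof.
  intros Hd [H1 H2]. unfold speed.
  apply continuous_sqrt_comp. apply cplus.
  apply cpow2. apply H1.
  apply (sum_cont (fun i t => exp (-2 * lam i * gy t) * Derive (gx i) t ^ 2)).
  intros i Hi. apply cmult.
  apply continuous_exp_comp. apply cmult. apply cconst.
  apply cder. apply H1.
  apply cpow2. apply H2; lia.
Qed.

Lemma speed_exRInt d lam gy gx a b : (1 <= d)%nat -> C1_curve d gy gx ->
  ex_RInt (speed d lam gy gx) a b.
Proof.
  intros. apply (ex_RInt_continuous (V:=R_CompleteNormedModule)); intros; apply speed_cont; auto.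
Qed.

Lemma is_derive_eq (f : R -> R) x l l' : is_derive f x l -> l = l' -> is_derive f x l'.
Proof. intros H ->; auto. Qed.

Lemma der_lin2 (a b c1 c2 c0 : R) t :
  is_derive (fun t => c0 + c1 * Sf (a*t+b) + c2 * Sf (a*t + (b-2))) t
    (c1 * (a * q (a*t+b)) + c2 * (a * q (a*t+(b-2)))).
Proof.
  eapply is_derive_eq.
  apply (is_derive_plus (fun t => c0 + c1 * Sf (a*t+b)) (fun t => c2 * Sf (a*t + (b-2)))).
  apply (is_derive_plus (fun t => c0) (fun t => c1 * Sf (a*t+b))).
  apply is_derive_const.
  apply (is_derive_scal (fun t => Sf (a*t+b))). apply Sf_lin.
  apply (is_derive_scal (fun t => Sf (a*t+(b-2)))). apply Sf_lin.
  unfold plus, zero, scal; simpl; unfold mult, plus; simpl. ring.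
Qed.

Lemma der_lin1 (a b c1 : R) t :
  is_derive (fun t => c1 * Sf (a*t+b)) t (c1 * (a * q (a*t+b))).
Proof.
  eapply is_derive_eq.
  apply (is_derive_scal (fun t => Sf (a*t+b))). apply Sf_lin.
  unfold scal; simpl; unfold mult; simpl. ring.
Qed.

Lemma cq a b t : continuous (fun t => q (a*t+b)) t.
Proof.
  apply (continuous_comp (fun t => a*t+b) q). apply cplus. apply cmult. apply cconst. apply cid. apply cconst.
  apply q_cont.
Qed.

Lemma sum_nonneg (F : nat -> R) n : (forall i, (i <= n)%nat -> 0 <= F i) -> 0 <= sum_n F n.
Proof.
  induction n; intros H. rewrite sum_O; apply H; lia.
  rewrite sum_Sn. unfold plus; simpl. apply Rplus_le_le_0_compat. apply IHn; intros; apply H; lia. apply H; lia.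
Qed.

Lemma sqrt_bound a c S : 0 <= c -> 0 <= S -> sqrt (a^2 + c^2*S) <= Rabs a + c * sqrt S.
Proof.
  intros Hc HS.
  assert (H0 : 0 <= Rabs a + c * sqrt S) by (pose proof (Rabs_pos a); pose proof (sqrt_pos S); nra).
  rewrite <- (sqrt_pow2 (Rabs a + c*sqrt S)) by auto.
  apply sqrt_le_1_alt.
  assert (E1 : a^2 = Rabs a ^2) by (rewrite <- pow2_abs; auto).
  assert (E2 : sqrt S ^2 = S) by (apply pow2_sqrt; auto).
  pose proof (Rabs_pos a); pose proof (sqrt_pos S).
  assert (E3 : c^2 * sqrt S ^2 = c^2 * S) by (rewrite E2; auto).
  rewrite E1. assert (0 <= Rabs a * c * sqrt S) by (apply Rmult_le_pos; auto; apply Rmult_le_pos; auto).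
  nra.
Qed.

Lemma sum_scal c (F : nat -> R) n : sum_n (fun i => c * F i) n = c * sum_n F n.
Proof.
  induction n. rewrite !sum_O; auto.
  rewrite !sum_Sn, IHn. unfold plus; simpl. ring.
Qed.

Section UB.
Variables (d : nat) (lam : nat -> R) (s y P : R) (x : nat -> R).
Definition ugy := fun t => -s + (P+s) * Sf (3*t+0) + (y-P) * Sf (3*t + (0-2)).
Definition ugx := fun (i : nat) t => x i * Sf (3*t + -1).
Definition dugy t := (P+s) * (3 * q (3*t+0)) + (y-P) * (3 * q (3*t+(0-2))).

Lemma ugy_der t : is_derive ugy t (dugy t).
Proof. apply der_lin2. Qed.
Lemma ugx_der i t : is_derive (ugx i) t (x i * (3 * q (3*t + -1))).
Proof. apply der_lin1. Qed.

Lemma u_C1 : C1_curve d ugy ugx.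
Proof.
  split.
  - intros t. split. eexists; apply ugy_der.
    apply (continuous_ext dugy). intros; symmetry; apply is_derive_unique, ugy_der.
    unfold dugy. apply cplus; apply cmult; try apply cconst; apply cmult; try apply cconst; apply cq.
  - intros i _ t. split. eexists; apply ugx_der.
    apply (continuous_ext (fun t => x i * (3 * q (3*t + -1)))). intros; symmetry; apply is_derive_unique, ugx_der.
    apply cmult; try apply cconst; apply cmult; try apply cconst; apply cq.
Qed.

Lemma u_start : ugy 0 = -s /\ forall i, ugx i 0 = 0.
Proof.
  unfold ugy, ugx. rewrite (Sf_low (3*0+0)), (Sf_low (3*0+(0-2))), (Sf_low (3*0+-1)) by lra. split. ring. intros; ring.
Qed.
Lemma u_end : ugy 1 = y /\ forall i, ugx i 1 = x i.
Proof.
  unfold ugy, ugx. rewrite (Sf_high (3*1+0)), (Sf_high (3*1+(0-2))), (Sf_high (3*1+-1)) by lra. split. ring. intros; ring.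
Qed.

Definition W0 := sqrt (sum_n (fun i => exp (-2 * lam i * P) * x i ^ 2) (d - 1)).

Lemma u_speed_bound t : P + s >= 0 -> P >= y ->
  speed d lam ugy ugx t <=
  (P+s) * (3 * q (3*t+0)) + (P-y) * (3 * q (3*t+(0-2))) + W0 * (3 * q (3*t + -1)).
Proof.
  intros H1 H2. unfold speed.
  rewrite (is_derive_unique _ _ _ (ugy_der t)).
  rewrite (sum_n_ext (fun i => exp (-2 * lam i * ugy t) * Derive (ugx i) t ^ 2)
             (fun i => ((3 * q (3*t + -1))^2) * (exp (-2 * lam i * P) * x i ^ 2))).
  2:{ intros i. rewrite (is_derive_unique _ _ _ (ugx_der i t)). match goal with |- ?a = ?b => change (@eq R a b) end.
      destruct (Req_dec (q (3*t + -1)) 0) as [E|E].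
      rewrite E; ring.
      apply q_pos_mid in E.
      assert (ugy t = P). { unfold ugy. rewrite Sf_high by lra. rewrite Sf_low by lra. ring. }
      rewrite H. ring. }
  rewrite sum_scal.
  eapply Rle_trans. apply sqrt_bound.
  pose proof (q_nonneg (3*t + -1)); lra.
  apply sum_nonneg; intros. pose proof (exp_pos (-2 * lam i * P)). pose proof (pow2_ge_0 (x i)). nra.
  fold W0. rewrite (Rmult_comm (3 * q (3 * t + -1)) W0). apply Rplus_le_compat_r.
  pose proof (q_nonneg (3*t+0)). pose proof (q_nonneg (3*t+(0-2))).
  unfold dugy. apply Rabs_le. split; nra.
Qed.

Lemma u_len : P + s >= 0 -> P >= y -> (1 <= d)%nat ->
  curve_length d lam ugy ugx <= s + 2 * P - y + W0.
Proof.
  intros H1 H2 Hd. unfold curve_length.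
  set (R0 := fun t => (P+s) * (3 * q (3*t+0)) + (P-y) * (3 * q (3*t+(0-2))) + W0 * (3 * q (3*t + -1))).
  eapply Rle_trans. apply RInt_le with (g := R0). lra.
  apply speed_exRInt; auto. apply u_C1.
  apply exRInt_c. intros. unfold R0. apply cplus. apply cplus.
  all: try (apply cmult; try apply cconst; apply cmult; try apply cconst; apply cq).
  intros; apply u_speed_bound; auto.
  set (F := fun t => (0 + (P+s) * Sf (3*t+0) + (P-y) * Sf (3*t + (0-2))) + W0 * Sf (3*t + -1)).
  rewrite (is_RInt_unique (V:=R_CompleteNormedModule) R0 0 1 (minus (F 1) (F 0))).
  unfold minus, plus, opp, F; simpl.
  rewrite (Sf_low (3*0+0)), (Sf_low (3*0+(0-2))), (Sf_low (3*0+-1)) by lra.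
  rewrite (Sf_high (3*1+0)), (Sf_high (3*1+(0-2))), (Sf_high (3*1+-1)) by lra. lra.
  apply (is_RInt_derive (V:=R_CompleteNormedModule) F).
  intros t _. unfold F, R0. eapply is_derive_eq.
  apply (is_derive_plus (fun t => 0 + (P+s) * Sf (3*t+0) + (P-y) * Sf (3*t + (0-2))) (fun t => W0 * Sf (3*t + -1))).
  apply der_lin2. apply der_lin1. unfold plus; simpl. ring.
  intros. unfold R0. apply cplus. apply cplus.
  all: try (apply cmult; try apply cconst; apply cmult; try apply cconst; apply cq).
Qed.
End UB.

Lemma exp_mono a b : a <= b -> exp a <= exp b.
Proof. intros [H|H]. left; apply exp_increasing; auto. subst; lra. Qed.

Lemma sum_ge_term (F : nat -> R) n i : (forall j, (j <= n)%nat -> 0 <= F j) -> (i <= n)%nat -> F i <= sum_n F n.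
Proof.
  induction n; intros H Hi.
  - assert (i = 0%nat) by lia. subst. rewrite sum_O. lra.
  - rewrite sum_Sn. unfold plus; simpl.
    destruct (Nat.eq_dec i (S n)).
    + subst. assert (0 <= sum_n F n) by (apply sum_nonneg; intros; apply H; lia). lra.
    + assert (F i <= sum_n F n) by (apply IHn; [intros; apply H; lia| lia]).
      assert (0 <= F (S n)) by (apply H; lia). lra.
Qed.

Lemma sqrt_abs a : sqrt (a^2) = Rabs a.
Proof. rewrite <- pow2_abs. apply sqrt_pow2, Rabs_pos. Qed.

Section LB.
Variables (d : nat) (lam : nat -> R) (gy : R -> R) (gx : nat -> R -> R) (s y : R) (x : nat -> R).
Hypothesis Hd : (1 <= d)%nat.
Hypothesis HC : C1_curve d gy gx.
Hypothesis Hy0 : gy 0 = -s.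
Hypothesis Hx0 : forall i, (i < d)%nat -> gx i 0 = 0.
Hypothesis Hy1 : gy 1 = y.
Hypothesis Hx1 : forall i, (i < d)%nat -> gx i 1 = x i.

Let v := speed d lam gy gx.
Let L := curve_length d lam gy gx.

Lemma v_cont t : continuous v t.
Proof. apply speed_cont; auto. Qed.

Lemma sum_part_nonneg t : 0 <= sum_n (fun i => exp (-2 * lam i * gy t) * Derive (gx i) t ^ 2) (d - 1).
Proof. apply sum_nonneg; intros. apply Rmult_le_pos. left; apply exp_pos. apply pow2_ge_0. Qed.

Lemma lb_dy t : Rabs (Derive gy t) <= v t.
Proof.
  unfold v, speed. rewrite <- sqrt_abs. apply sqrt_le_1_alt.
  pose proof (sum_part_nonneg t). lra.
Qed.

Lemma lb_dx i t : (i < d)%nat -> exp (- lam i * gy t) * Rabs (Derive (gx i) t) <= v t.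
Proof.
  intros Hi. unfold v, speed.
  assert (E : (exp (- lam i * gy t) * Rabs (Derive (gx i) t))^2 = exp (-2 * lam i * gy t) * Derive (gx i) t ^ 2).
  { rewrite Rpow_mult_distr. rewrite pow2_abs.
    replace (-2 * lam i * gy t) with ((- lam i * gy t) + (- lam i * gy t)) by ring.
    rewrite exp_plus. ring. }
  rewrite <- (sqrt_pow2 (exp (- lam i * gy t) * Rabs (Derive (gx i) t))).
  2:{ apply Rmult_le_pos. left; apply exp_pos. apply Rabs_pos. }
  apply sqrt_le_1_alt. rewrite E.
  pose proof (pow2_ge_0 (Derive gy t)).
  assert (exp (-2 * lam i * gy t) * Derive (gx i) t ^ 2 <= sum_n (fun i => exp (-2 * lam i * gy t) * Derive (gx i) t ^ 2) (d - 1)).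
  { apply (sum_ge_term (fun i => exp (-2 * lam i * gy t) * Derive (gx i) t ^ 2)).
    intros. apply Rmult_le_pos. left; apply exp_pos. apply pow2_ge_0. lia. }
  lra.
Qed.

Lemma dgy_cont t : continuous (Derive gy) t.
Proof. destruct HC as [H1 _]. apply H1. Qed.

Lemma RInt_dgy a b : RInt (Derive gy) a b = gy b - gy a.
Proof. destruct HC as [H1 _]. apply RInt_Derive; intros; apply H1. Qed.

Lemma lb_vert : s + y <= L.
Proof.
  unfold L, curve_length. fold v.
  replace (s + y) with (RInt (Derive gy) 0 1) by (rewrite RInt_dgy; lra).
  apply RInt_le. lra. apply exRInt_c; apply dgy_cont. apply exRInt_c; apply v_cont.
  intros t _. pose proof (lb_dy t). pose proof (Rle_abs (Derive gy t)). lra.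
Qed.

Let ell t := RInt v 0 t.

Lemma ell_der t : is_derive ell t (v t).
Proof.
  apply (is_derive_RInt v ell 0 t).
  apply filter_forall; intros b. unfold ell. apply (RInt_correct (V:=R_CompleteNormedModule)). apply exRInt_c, v_cont.
  apply v_cont.
Qed.

Lemma gy_le1 t : 0 <= t -> gy t <= -s + ell t.
Proof.
  intros Ht. rewrite <- Hy0.
  assert (gy t - gy 0 <= ell t).
  { rewrite <- RInt_dgy. apply RInt_le; auto. apply exRInt_c; apply dgy_cont. apply exRInt_c; apply v_cont.
    intros z _. pose proof (lb_dy z). pose proof (Rle_abs (Derive gy z)). lra. }
  lra.
Qed.

Lemma gy_le2 t : t <= 1 -> gy t <= y + L - ell t.
Proof.
  intros Ht.
  assert (EL : ell t + RInt v t 1 = L).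
  { unfold ell, L, curve_length. fold v. rewrite <- (RInt_Chasles v 0 t 1). reflexivity.
    apply exRInt_c, v_cont. apply exRInt_c, v_cont. }
  assert (- RInt v t 1 <= gy 1 - gy t).
  { rewrite <- RInt_dgy. rewrite <- (RInt_opp (V:=R_CompleteNormedModule)) by (apply exRInt_c, v_cont).
    apply RInt_le; auto. apply exRInt_c. intros; apply (continuous_opp (V:=R_NormedModule)), v_cont.
    apply exRInt_c; apply dgy_cont.
    intros z _. pose proof (lb_dy z). pose proof (Rle_abs (- Derive gy z)). rewrite Rabs_Ropp in H0.
    unfold opp; simpl. lra. }
  lra.
Qed.

Lemma lb_x i : (i < d)%nat -> Rabs (x i) <= RInt (fun t => exp (lam i * gy t) * v t) 0 1.
Proof.
  intros Hi. destruct HC as [_ H2].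
  assert (Hc : forall z, continuous (fun t => exp (lam i * gy t) * v t) z).
  { intros z. apply cmult. apply continuous_exp_comp. apply cmult. apply cconst.
    apply cder. destruct HC as [H1 _]. apply H1. apply v_cont. }
  assert (Hp : forall t, Rabs (Derive (gx i) t) <= exp (lam i * gy t) * v t).
  { intros t. pose proof (lb_dx i t Hi).
    assert (E : exp (lam i * gy t) * exp (- lam i * gy t) = 1).
    { rewrite <- exp_plus. replace (lam i * gy t + - lam i * gy t) with 0 by ring. apply exp_0. }
    pose proof (exp_pos (lam i * gy t)).
    replace (Rabs (Derive (gx i) t)) with (exp (lam i * gy t) * (exp (- lam i * gy t) * Rabs (Derive (gx i) t))).
    apply Rmult_le_compat_l; lra.
    rewrite <- Rmult_assoc, E. ring. }
  assert (Ex : x i = RInt (Derive (gx i)) 0 1).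
  { rewrite RInt_Derive. rewrite Hx1, Hx0 by auto. ring. intros; apply H2; auto. intros; apply H2; auto. }
  assert (Hd2 : ex_RInt (Derive (gx i)) 0 1).
  { apply exRInt_c. intros; apply H2; auto. }
  rewrite Ex. apply Rabs_le. split.
  - rewrite <- (Ropp_involutive (RInt (Derive (gx i)) 0 1)).
    apply Ropp_le_contravar.
    assert (E2 : RInt (fun t => - Derive (gx i) t) 0 1 = - RInt (Derive (gx i)) 0 1).
    { apply (RInt_opp (V:=R_CompleteNormedModule)); auto. }
    rewrite <- E2.
    apply RInt_le. lra.
    apply (ex_RInt_opp (V:=R_CompleteNormedModule)); auto. apply exRInt_c; auto.
    intros t _. pose proof (Hp t). pose proof (Rle_abs (- Derive (gx i) t)). rewrite Rabs_Ropp in H0.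
    unfold opp; simpl. lra.
  - apply RInt_le. lra. auto. apply exRInt_c; auto.
    intros t _. pose proof (Hp t). pose proof (Rle_abs (Derive (gx i) t)). lra.
Qed.


Lemma v_nonneg t : 0 <= v t.
Proof. unfold v, speed. apply sqrt_pos. Qed.

Lemma ell_cont t : continuous ell t.
Proof. apply cder. eexists; apply ell_der. Qed.

Lemma lb_atan (l : R) : 0 < l ->
  RInt (fun t => exp (l * gy t) * v t) 0 1 <= (2 * PI / l) * exp (l * (L - s + y) / 2).
Proof.
  intros Hl.
  set (c := exp (- l * (y + L + s) / 2)).
  set (h := fun t => c * exp (l * ell t)).
  set (hd := fun t => c * ((l * v t) * exp (l * ell t))).
  assert (Hh : forall t, is_derive h t (hd t)).
  { intros t. unfold h, hd. apply is_derive_scal.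
    apply (is_derive_comp exp (fun t => l * ell t)). apply is_derive_exp.
    apply is_derive_scal. apply ell_der. }
  set (Gd := fun t => hd t * / (1 + Rsqr (h t))).
  set (K := 2 * exp (- l * s) / (c * l)).
  assert (Hcp : 0 < c) by apply exp_pos.
  assert (HG : forall t, is_derive (fun t => K * atan (h t)) t (K * Gd t)).
  { intros t. apply is_derive_scal. unfold Gd.
    eapply is_derive_eq. apply (is_derive_comp atan h). apply is_derive_atan. apply Hh.
    unfold scal; simpl; unfold mult; simpl. ring. }
  assert (HGc : forall t, continuous (fun t => K * Gd t) t).
  { intros t. apply cmult. apply cconst. unfold Gd. apply cmult.
    unfold hd. apply cmult. apply cconst. apply cmult. apply cmult. apply cconst. apply v_cont.
    apply continuous_exp_comp. apply cmult. apply cconst. apply ell_cont.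
    apply continuous_Rinv_comp. apply cplus. apply cconst. unfold Rsqr. apply cmult;
    (unfold h; apply cmult; [apply cconst| apply continuous_exp_comp; apply cmult; [apply cconst|apply ell_cont]]).
    pose proof (Rle_0_sqr (h t)). lra. }
  eapply Rle_trans. apply RInt_le with (g := fun t => K * Gd t). lra.
  apply exRInt_c. intros z. apply cmult. apply continuous_exp_comp. apply cmult. apply cconst.
    apply cder. destruct HC as [H1 _]. apply H1. apply v_cont.
  apply exRInt_c. auto.
  - intros t Ht.
    pose proof (gy_le1 t ltac:(lra)) as G1. pose proof (gy_le2 t ltac:(lra)) as G2.
    fold L in G2. fold ell in G1, G2.
    set (g := gy t) in *. set (e := ell t) in *. pose proof (v_nonneg t) as Hw. set (w := v t) in *.
    set (A := exp (l * g)). set (u := exp (l * e)). set (F := exp (- l * s)). set (E := exp (l * (y + L))).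
    assert (HA : A <= F * u).
    { unfold A, F, u. rewrite <- exp_plus. apply exp_mono. nra. }
    assert (HAu : A * u <= E).
    { unfold A, E, u. rewrite <- exp_plus. apply exp_mono. nra. }
    assert (Hc2 : c * c * E = F).
    { unfold c, E, F. rewrite <- !exp_plus. f_equal. field. }
    assert (Hu : 0 < u) by apply exp_pos.
    assert (HF : 0 < F) by apply exp_pos.
    assert (HApos : 0 < A) by apply exp_pos.
    unfold Gd, hd, h. fold e u w.
    set (D := 1 + Rsqr (c * u)).
    assert (HD : 0 < D) by (unfold D; pose proof (Rle_0_sqr (c*u)); lra).
    replace (K * (c * (l * w * u) * / D)) with (2 * F * w * u / D).
    2:{ unfold K, F. field. repeat split; lra. }
    apply Rmult_le_reg_r with D; auto.
    unfold Rdiv. rewrite (Rmult_assoc (2 * F * w * u)), Rinv_l, Rmult_1_r by lra.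
    unfold D, Rsqr.
    assert (A * (c * u * (c * u)) <= F * u).
    { replace (A * (c * u * (c * u))) with ((A * u) * (c * c * u)) by ring.
      replace (F * u) with (E * (c * c * u)) by (rewrite <- Hc2; ring).
      apply Rmult_le_compat_r. assert (0 < c*c) by nra. nra. auto. }
    assert (A * (1 + c * u * (c * u)) <= 2 * F * u) by nra.
    nra.
  - rewrite (is_RInt_unique (V:=R_CompleteNormedModule) (fun t => K * Gd t) 0 1
       (minus (K * atan (h 1)) (K * atan (h 0)))).
    2:{ apply (is_RInt_derive (V:=R_CompleteNormedModule) (fun t => K * atan (h t))).
        intros; apply HG. intros; apply HGc. }
    unfold minus, plus, opp; simpl.
    pose proof (atan_bound (h 1)). pose proof (atan_bound (h 0)).
    assert (HK : K = 2 / l * exp (l * (L - s + y) / 2)).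
    { unfold K, c. replace (exp (- l * s)) with (exp (l * (L - s + y) / 2) * exp (- l * (y + L + s) / 2)).
      field. split. lra. apply Rgt_not_eq, exp_pos.
      rewrite <- exp_plus. f_equal. field. }
    assert (0 < K) by (rewrite HK; apply Rmult_lt_0_compat; [apply Rdiv_lt_0_compat; lra| apply exp_pos]).
    replace (2 * PI / l * exp (l * (L - s + y) / 2)) with (K * PI) by (rewrite HK; field; lra).
    assert (atan (h 1) - atan (h 0) <= PI) by lra.
    nra.
Qed.

End LB.

Lemma glb_real (E : R -> Prop) a : (forall L, E L -> a <= L) -> (exists l0, E l0) ->
  a <= real (Glb_Rbar E) /\ forall L, E L -> real (Glb_Rbar E) <= L.
Proof.
  intros Hlb [l0 Hl0]. destruct (Glb_Rbar_correct E) as [H1 H2].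
  assert (Ha : Rbar_le a (Glb_Rbar E)). { apply H2. intros z Hz. simpl. apply Hlb; auto. }
  assert (Hb : forall L, E L -> Rbar_le (Glb_Rbar E) L) by (intros; apply H1; auto).
  pose proof (Hb l0 Hl0) as Hc.
  destruct (Glb_Rbar E) as [r| |]; simpl in *; try contradiction.
  split; auto; intros L HL; apply (Hb L HL).
Qed.

Definition curveset d lam (sv : R) (p : point) :=
  fun L => exists (gy : R -> R) (gx : nat -> R -> R),
     C1_curve d gy gx /\
     gy 0 = - sv /\ (forall i, (i < d)%nat -> gx i 0 = 0) /\
     gy 1 = fst p /\ (forall i, (i < d)%nat -> gx i 1 = snd p i) /\
     L = curve_length d lam gy gx.

Lemma rdist_eq d lam sv p : rdist d lam (origin_ray sv) p = Glb_Rbar (curveset d lam sv p).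
Proof. reflexivity. Qed.

Lemma curveset_ne d lam sv p : exists l0, curveset d lam sv p l0.
Proof.
  exists (curve_length d lam (ugy sv (fst p) 0) (ugx (snd p))).
  exists (ugy sv (fst p) 0), (ugx (snd p)).
  pose proof (u_start sv (fst p) 0 (snd p)) as [S1 S2].
  pose proof (u_end sv (fst p) 0 (snd p)) as [E1 E2].
  split. apply u_C1. split. exact S1. split. intros; apply S2. split. exact E1. split. intros; apply E2. reflexivity.
Qed.

Lemma busemann_lb d lam p g :
  (forall n : nat, forall L, curveset d lam (INR n) p L -> INR n + g <= L) ->
  Rbar_le g (busemann_xi_minus d lam p).
Proof.
  intros H. unfold busemann_xi_minus, Lim.
  rewrite <- (Lim_seq_const g).
  apply Lim_seq_le_loc. exists 0%nat. intros n _. simpl Rbar_loc_seq.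
  rewrite rdist_eq.
  destruct (glb_real (curveset d lam (INR n) p) (INR n + g)) as [G1 _].
  apply H. apply curveset_ne. lra.
Qed.

Lemma busemann_ub d lam p g : (1 <= d)%nat ->
  (exists N : nat, forall n : nat, (N <= n)%nat -> exists L, curveset d lam (INR n) p L /\ L <= INR n + g) ->
  Rbar_le (busemann_xi_minus d lam p) g.
Proof.
  intros Hd [N H]. unfold busemann_xi_minus, Lim.
  rewrite <- (Lim_seq_const g).
  apply Lim_seq_le_loc. exists N. intros n Hn. simpl Rbar_loc_seq.
  rewrite rdist_eq.
  destruct (glb_real (curveset d lam (INR n) p) (INR n + fst p)) as [_ G2].
  - intros L [gy [gx [HC [Hy0 [Hx0 [Hy1 [Hx1 ->]]]]]]].
    pose proof (lb_vert d lam gy gx (INR n) (fst p) Hd HC Hy0 Hy1). lra.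
  - apply curveset_ne.
  - destruct (H n Hn) as [L [HL HL2]]. pose proof (G2 L HL). lra.
Qed.

Lemma curve_lb d lam s p L i : (1 <= d)%nat -> (i < d)%nat -> 0 < lam i ->
  curveset d lam s p L ->
  Rabs (snd p i) <= (2 * PI / lam i) * exp (lam i * (L - s + fst p) / 2).
Proof.
  intros Hd Hi Hl [gy [gx [HC [Hy0 [Hx0 [Hy1 [Hx1 ->]]]]]]].
  eapply Rle_trans. apply (lb_x d lam gy gx (snd p) Hd HC Hx0 Hx1 i Hi).
  apply (lb_atan d lam gy gx s (fst p) Hd HC Hy0 Hy1 (lam i) Hl).
Qed.

Lemma LBy d lam (p : point) : (1 <= d)%nat -> Rbar_le (fst p) (busemann_xi_minus d lam p).
Proof.
  intros Hd. apply busemann_lb. intros n L [gy [gx [HC [Hy0 [Hx0 [Hy1 [Hx1 ->]]]]]]].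
  pose proof (lb_vert d lam gy gx (INR n) (fst p) Hd HC Hy0 Hy1). lra.
Qed.

Lemma LBx d lam (p : point) i g : (1 <= d)%nat -> (i < d)%nat -> 0 < lam i ->
  Rabs (snd p i) > (8 / lam i) * exp (lam i * (g + fst p) / 2) ->
  Rbar_le g (busemann_xi_minus d lam p).
Proof.
  intros Hd Hi Hl Hx. apply busemann_lb. intros n L HL.
  pose proof (curve_lb d lam (INR n) p L i Hd Hi Hl HL) as H.
  destruct (Rle_or_lt (INR n + g) L) as [|Hlt]; auto.
  exfalso.
  assert (exp (lam i * (L - INR n + fst p) / 2) <= exp (lam i * (g + fst p) / 2)).
  { apply exp_mono. apply Rmult_le_compat_r. lra. apply Rmult_le_compat_l; lra. }
  assert (2 * PI / lam i <= 8 / lam i).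
  { unfold Rdiv. apply Rmult_le_compat_r. left; apply Rinv_0_lt_compat; auto. pose proof PI_4. lra. }
  assert (0 <= 2 * PI / lam i) by (pose proof PI_RGT_0; unfold Rdiv; apply Rmult_le_pos; [lra|left; apply Rinv_0_lt_compat; auto]).
  pose proof (exp_pos (lam i * (L - INR n + fst p) / 2)).
  assert ((2 * PI / lam i) * exp (lam i * (L - INR n + fst p) / 2) <= (8 / lam i) * exp (lam i * (g + fst p) / 2)).
  { apply Rmult_le_compat; lra. }
  lra.
Qed.

Lemma sum_le_const (F : nat -> R) c n : (forall i, (i <= n)%nat -> F i <= c) -> sum_n F n <= c * INR (S n).
Proof.
  induction n; intros H.
  - rewrite sum_O. simpl. specialize (H 0%nat (le_n 0)). lra.
  - rewrite sum_Sn. unfold plus; simpl plus. rewrite (S_INR (S n)).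
    assert (sum_n F n <= c * INR (S n)) by (apply IHn; intros; apply H; lia).
    assert (F (S n) <= c) by (apply H; lia). unfold plus in *; simpl in *. lra.
Qed.

Lemma sqrt_le_1p z : 0 <= z -> sqrt z <= 1 + z.
Proof.
  intros Hz. rewrite <- (sqrt_pow2 (1 + z)) by lra. apply sqrt_le_1_alt. nra.
Qed.

Lemma UBreg d lam (p : point) : (1 <= d)%nat -> fst p <= 1 ->
  (forall i, (i < d)%nat -> Rabs (snd p i) <= 2 * exp (lam i * (fst p + 1) / 2)) ->
  Rbar_le (busemann_xi_minus d lam p) (2 + 4 * INR d).
Proof.
  intros Hd Hy Hx. apply busemann_ub; auto.
  set (P := (fst p + 1) / 2).
  destruct (INR_unbounded (Rabs P)) as [N HN]. exists N. intros n Hn.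
  exists (curve_length d lam (ugy (INR n) (fst p) P) (ugx (snd p))).
  split.
  - exists (ugy (INR n) (fst p) P), (ugx (snd p)).
    pose proof (u_start (INR n) (fst p) P (snd p)) as [S1 S2].
    pose proof (u_end (INR n) (fst p) P (snd p)) as [E1 E2].
    split. apply u_C1. split. exact S1. split. intros; apply S2. split. exact E1. split. intros; apply E2. reflexivity.
  - assert (HnN : INR N <= INR n) by (apply le_INR; auto).
    pose proof (Rle_abs (-P)). rewrite Rabs_Ropp in H.
    eapply Rle_trans. apply u_len; auto. lra. unfold P; lra.
    unfold W0.
    set (Z := sum_n (fun i => exp (-2 * lam i * P) * snd p i ^ 2) (d - 1)).
    assert (HZ0 : 0 <= Z) by (apply sum_nonneg; intros; apply Rmult_le_pos; [left; apply exp_pos| apply pow2_ge_0]).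
    assert (HZ : Z <= 4 * INR d).
    { assert (Ed : INR d = INR (S (d - 1))) by (f_equal; lia). rewrite Ed. unfold Z. apply sum_le_const.
      intros i Hi. assert (Hi' : (i < d)%nat) by lia. specialize (Hx i Hi').
      assert (Hsq : snd p i ^ 2 <= 4 * exp (2 * lam i * P)).
      { rewrite <- pow2_abs.
        assert (E0 : 4 * exp (2 * lam i * P) = (2 * exp (lam i * (fst p + 1) / 2)) ^ 2).
        { simpl. rewrite Rmult_1_r. replace (2 * lam i * P) with (lam i * (fst p + 1) / 2 + lam i * (fst p + 1) / 2) by (unfold P; field).
          rewrite exp_plus. ring. }
        rewrite E0. pose proof (Rabs_pos (snd p i)). apply pow_incr. lra. }
      assert (E1 : exp (-2 * lam i * P) * exp (2 * lam i * P) = 1).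
      { rewrite <- exp_plus. replace (-2 * lam i * P + 2 * lam i * P) with 0 by ring. apply exp_0. }
      pose proof (exp_pos (-2 * lam i * P)).
      apply Rle_trans with (exp (-2 * lam i * P) * (4 * exp (2 * lam i * P))).
      apply Rmult_le_compat_l; lra. rewrite <- Rmult_assoc, (Rmult_comm _ 4), Rmult_assoc, E1. lra. }
    pose proof (sqrt_le_1p Z HZ0). unfold P in *. lra.
Qed.

Lemma expbig l l0 K a : 0 < l0 <= l -> a / (l0 * l0) <= K -> 0 < a -> a / l <= exp (l * K).
Proof.
  intros Hl HK Ha.
  assert (HK0 : 0 < K) by (eapply Rlt_le_trans; [|apply HK]; apply Rdiv_lt_0_compat; [lra | apply Rmult_lt_0_compat; lra]).
  assert (0 < l * K) by nra.
  pose proof (exp_ineq1 (l * K) ltac:(lra)).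
  assert (a / l <= l * K).
  { apply Rle_trans with (l * (a / (l0 * l0))).
    2: apply Rmult_le_compat_l; lra.
    unfold Rdiv. apply Rmult_le_reg_r with (l * (l0 * l0)). apply Rmult_lt_0_compat; [lra| apply Rmult_lt_0_compat; lra].
    replace (a * / l * (l * (l0 * l0))) with (a * (l0 * l0)) by (field; lra).
    replace (l * (a * / (l0 * l0)) * (l * (l0 * l0))) with (a * (l * l)) by (field; lra).
    apply Rmult_le_compat_l. lra. apply Rmult_le_compat; lra. }
  lra.
Qed.

Lemma mono_le (d : nat) (lam : nat -> R) :
  (forall i, (S i < d)%nat -> lam i <= lam (S i)) ->
  forall k i, (i + k < d)%nat -> lam i <= lam (i + k)%nat.
Proof.
  intros H. induction k; intros i Hi.
  - rewrite Nat.add_0_r; lra.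
  - eapply Rle_trans. apply IHk; lia. replace (i + S k)%nat with (S (i + k)) by lia. apply H; lia.
Qed.

Lemma expinv a : exp (- a) * exp a = 1.
Proof. rewrite <- exp_plus. replace (-a + a) with 0 by ring. apply exp_0. Qed.

Theorem mainTheorem9 (d : nat) (lam : nat -> R)
  (hd : (1 <= d)%nat)
  (hpos : 0 < lam 0%nat)
  (hmono : forall i, (S i < d)%nat -> lam i <= lam (S i)) :
  exists CV : R, 0 < CV /\
    (forall p : point, horoball_xi_minus d lam (- CV) p -> Vneg d lam p) /\
    (forall p : point, Vneg d lam p -> horoball_xi_minus d lam CV p) /\
    (forall p : point, boundary d (Vneg d lam) p ->
       Rbar_le (- CV) (busemann_xi_minus d lam p) /\
       Rbar_le (busemann_xi_minus d lam p) CV).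
Proof.
  set (l0 := lam 0%nat).
  assert (Hlow : forall i, (i < d)%nat -> l0 <= lam i).
  { intros i Hi. pose proof (mono_le d lam hmono i 0%nat ltac:(lia)). simpl in H. exact H. }
  assert (Hhigh : forall i, (i < d)%nat -> lam i <= lam (d - 1)%nat).
  { intros i Hi. pose proof (mono_le d lam hmono (d - 1 - i) i ltac:(lia)).
    replace (i + (d - 1 - i))%nat with (d - 1)%nat in H by lia. exact H. }
  assert (Hpos : forall i, (i < d)%nat -> 0 < lam i).
  { intros i Hi. specialize (Hlow i Hi). unfold l0 in *. lra. }
  set (Lm := lam (d - 1)%nat).
  assert (HLm : 0 < Lm) by (apply Hpos; lia).
  assert (H32 : 0 < 32 / (l0 * l0)).
  { apply Rdiv_lt_0_compat. lra. apply Rmult_lt_0_compat; unfold l0; lra. }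
  assert (Hd0 : 0 <= INR d) by apply pos_INR.
  set (C := 3 + 4 * INR d + 32 / (l0 * l0)).
  assert (HC0 : 0 < C) by (unfold C; lra).
  exists C. split; auto.
  split; [|split].
  -
    intros p Hp. unfold horoball_xi_minus in Hp. split.
    + intros i Hi. destruct (Rle_or_lt (exp (- lam i * fst p / 2) * Rabs (snd p i)) 1) as [ok|bad]; auto.
      exfalso.
      assert (Hl := Hpos i Hi). assert (Hl0 := Hlow i Hi).
      set (Ey := exp (lam i * fst p / 2)).
      assert (HEy : 0 < Ey) by apply exp_pos.
      assert (Hbx : Rabs (snd p i) > Ey).
      { replace (- lam i * fst p / 2) with (- (lam i * fst p / 2)) in bad by field.
        pose proof (expinv (lam i * fst p / 2)). fold Ey in H.
        apply Rmult_lt_reg_l with (exp (- (lam i * fst p / 2))). apply exp_pos. lra. }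
      assert (Hbig : 8 / lam i <= exp (lam i * (C / 4))).
      { apply (expbig (lam i) l0). unfold l0 in *; lra. unfold C.
        replace (8 / (l0 * l0)) with ((32 / (l0 * l0)) / 4) by (field; unfold l0; lra). lra. lra. }
      assert (Hb : Rabs (snd p i) > 8 / lam i * exp (lam i * (- C / 2 + fst p) / 2)).
      { replace (lam i * (- C / 2 + fst p) / 2) with (- (lam i * (C / 4)) + lam i * fst p / 2) by field.
        rewrite exp_plus. fold Ey.
        pose proof (expinv (lam i * (C / 4))). pose proof (exp_pos (- (lam i * (C / 4)))).
        assert (8 / lam i * exp (- (lam i * (C / 4))) <= 1).
        { apply Rle_trans with (exp (lam i * (C / 4)) * exp (- (lam i * (C / 4)))).
          apply Rmult_le_compat_r; lra. lra. }
        assert (8 / lam i * exp (- (lam i * (C / 4))) * Ey <= Ey) by (apply Rmult_le_compat_r with (r := Ey) in H1; lra).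
        lra. }
      pose proof (LBx d lam p i (- C / 2) hd Hi Hl Hb).
      pose proof (Rbar_le_trans _ _ _ H Hp). simpl in H0. lra.
    + destruct (Rle_or_lt (fst p) 0) as [|Hy]; auto. exfalso.
      pose proof (LBy d lam p hd). pose proof (Rbar_le_trans _ _ _ H Hp). simpl in H0. lra.
  -
    intros p [HV Hy]. unfold horoball_xi_minus.
    eapply Rbar_le_trans. apply UBreg; auto. lra.
    + intros i Hi. specialize (HV i Hi).
      pose proof (expinv (lam i * fst p / 2)).
      assert (Rabs (snd p i) <= exp (lam i * fst p / 2)).
      { replace (- lam i * fst p / 2) with (- (lam i * fst p / 2)) in HV by field.
        pose proof (exp_pos (- (lam i * fst p / 2))). pose proof (exp_pos (lam i * fst p / 2)).
        apply Rmult_le_reg_l with (exp (- (lam i * fst p / 2))); auto. lra. }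
      assert (exp (lam i * fst p / 2) <= exp (lam i * (fst p + 1) / 2)).
      { apply exp_mono. pose proof (Hpos i Hi). nra. }
      pose proof (exp_pos (lam i * (fst p + 1) / 2)). lra.
    + simpl. unfold C. lra.
  -
    intros p [Hn Hf].
    set (y := fst p).
    set (eps := exp (- Lm * (Rabs y + 1) / 2) / 2).
    assert (Hay : 0 <= Rabs y) by apply Rabs_pos.
    assert (Heps : 0 < eps) by (unfold eps; pose proof (exp_pos (- Lm * (Rabs y + 1) / 2)); lra).
    assert (Heps1 : eps < 1).
    { unfold eps. assert (exp (- Lm * (Rabs y + 1) / 2) <= exp 0) by (apply exp_mono; nra).
      rewrite exp_0 in H. lra. }
    assert (HepsL : forall i, (i < d)%nat -> 2 * eps <= exp (lam i * (y - 1) / 2)).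
    { intros i Hi. unfold eps. replace (2 * (exp (- Lm * (Rabs y + 1) / 2) / 2)) with (exp (- Lm * (Rabs y + 1) / 2)) by field.
      apply exp_mono. pose proof (Hhigh i Hi). pose proof (Hpos i Hi). fold Lm in H.
      pose proof (Rle_abs (-y)). rewrite Rabs_Ropp in H1.
      assert (lam i * (Rabs y + 1) <= Lm * (Rabs y + 1)) by (apply Rmult_le_compat_r; lra).
      assert (0 <= lam i * (y + Rabs y)) by (apply Rmult_le_pos; lra). nra. }
    assert (HepsU : forall i, (i < d)%nat -> 2 * eps <= exp (lam i * (y + 1) / 2)).
    { intros i Hi. unfold eps. replace (2 * (exp (- Lm * (Rabs y + 1) / 2) / 2)) with (exp (- Lm * (Rabs y + 1) / 2)) by field.
      apply exp_mono. pose proof (Hhigh i Hi). pose proof (Hpos i Hi). fold Lm in H.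
      pose proof (Rle_abs (-y)). rewrite Rabs_Ropp in H1.
      assert (lam i * (Rabs y + 1) <= Lm * (Rabs y + 1)) by (apply Rmult_le_compat_r; lra).
      assert (0 <= lam i * (y + Rabs y + 2)) by (apply Rmult_le_pos; lra). nra. }
    split.
    + destruct (Hf eps Heps) as [q [Hq [Hqy Hqx]]].
      apply Rabs_def2 in Hqy. fold y in Hqy.
      destruct (Rle_or_lt (fst q) 0) as [Hq0|Hq0].
      * assert (HnV : ~ Vset d lam q) by (intro; apply Hq; split; auto).
        unfold Vset in HnV. apply not_all_ex_not in HnV. destruct HnV as [i Hi].
        apply imply_to_and in Hi. destruct Hi as [Hi Hbad]. apply Rnot_le_lt in Hbad.
        assert (Hl := Hpos i Hi). assert (Hl0 := Hlow i Hi).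
        set (T := exp (lam i * (y - 1) / 2)).
        assert (HT : 0 < T) by apply exp_pos.
        assert (Hqi : Rabs (snd q i) > exp (lam i * fst q / 2)).
        { replace (- lam i * fst q / 2) with (- (lam i * fst q / 2)) in Hbad by field.
          pose proof (expinv (lam i * fst q / 2)).
          apply Rmult_lt_reg_l with (exp (- (lam i * fst q / 2))). apply exp_pos. lra. }
        assert (HqT : T <= exp (lam i * fst q / 2)) by (apply exp_mono; nra).
        specialize (Hqx i Hi). pose proof (Rabs_triang_inv (snd q i) (snd p i)).
        specialize (HepsL i Hi). fold T in HepsL.
        assert (Hpi : Rabs (snd p i) > T / 2) by lra.
        assert (Hbig : 16 / lam i <= exp (lam i * ((C - 1) / 2))).
        { apply (expbig (lam i) l0). unfold l0 in *; lra. unfold C.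
          replace (16 / (l0 * l0)) with ((32 / (l0 * l0)) / 2) by (field; unfold l0; lra). lra. lra. }
        assert (Hb : Rabs (snd p i) > 8 / lam i * exp (lam i * (- C + fst p) / 2)).
        { fold y. replace (lam i * (- C + y) / 2) with (- (lam i * ((C - 1) / 2)) + lam i * (y - 1) / 2) by field.
          rewrite exp_plus. fold T.
          pose proof (expinv (lam i * ((C - 1) / 2))). pose proof (exp_pos (- (lam i * ((C - 1) / 2)))).
          assert (Hk : 16 / lam i * exp (- (lam i * ((C - 1) / 2))) <= 1).
          { apply Rle_trans with (exp (lam i * ((C - 1) / 2)) * exp (- (lam i * ((C - 1) / 2)))).
            apply Rmult_le_compat_r; lra. lra. }
          assert (16 / lam i * exp (- (lam i * ((C - 1) / 2))) * T <= T) by (apply Rmult_le_compat_r with (r := T) in Hk; lra).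
          assert (E8 : 8 / lam i * (exp (- (lam i * ((C - 1) / 2))) * T) = (16 / lam i * exp (- (lam i * ((C - 1) / 2))) * T) / 2) by (field; lra).
          rewrite E8. lra. }
        exact (LBx d lam p i (- C) hd Hi Hl Hb).
      * eapply Rbar_le_trans. 2: apply (LBy d lam p hd). simpl. fold y. unfold C. lra.
    + destruct (Hn eps Heps) as [q [[HV Hq0] [Hqy Hqx]]].
      apply Rabs_def2 in Hqy. fold y in Hqy.
      eapply Rbar_le_trans. apply UBreg; auto. fold y. lra.
      * intros i Hi. specialize (HV i Hi). specialize (Hqx i Hi). specialize (HepsU i Hi).
        pose proof (Rabs_triang_inv (snd p i) (snd q i)). rewrite Rabs_minus_sym in Hqx.
        assert (Rabs (snd q i) <= exp (lam i * fst q / 2)).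
        { replace (- lam i * fst q / 2) with (- (lam i * fst q / 2)) in HV by field.
          pose proof (exp_pos (- (lam i * fst q / 2))). pose proof (expinv (lam i * fst q / 2)).
          apply Rmult_le_reg_l with (exp (- (lam i * fst q / 2))); auto. lra. }
        assert (exp (lam i * fst q / 2) <= exp (lam i * (y + 1) / 2)).
        { apply exp_mono. pose proof (Hpos i Hi). nra. }
        fold y. lra.
      * simpl. unfold C. lra.
Qed.
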